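(* Let $\mathcal{S}\subseteq 2^{[n]}$ be a Sperner family and $A\subseteq[n]$ a fixed set, and define $h_A:\mathcal{S}\to 2^{[n]}$ by $h_A(S)=S\cap A$. Then $\mathcal{F}=\mathcal{F}(\mathcal{S},h_A)$ is s-extremal and $\mathrm{Sh}(\mathcal{F})=\mathcal{H}(\mathcal{S})$.
   Context: $[n]=\{1,\dots,n\}$. A Sperner family is a family of sets none of which is contained in another. $\mathcal{F}$ shatters $S$ if $\{F\cap S:F\in\mathcal{F}\}=2^S$; $\mathrm{Sh}(\mathcal{F})$ is the family of shattered sets; $\mathcal{F}$ is s-extremal if $|\mathrm{Sh}(\mathcal{F})|=|\mathcal{F}|$. For $H\subseteq S\subseteq[n]$, $\mathcal{Q}_{S,H}=\{H\cup B: B\subseteq[n]\setminus S\}$. $\mathcal{H}(\mathcal{S})=\{F\subseteq[n]: \text{no } S\in\mathcal{S} \text{ satisfies } S\subseteq F\}$, and for $h:\mathcal{S}\to2^{[n]}$ with $h(S)\subseteq S$, $\mathcal{F}(\mathcal{S},h)=2^{[n]}\setminus\bigcup_{S\in\mathcal{S}}\mathcal{Q}_{S,h(S)}$. *)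

(* Defs.v *)
From mathcomp Require Import all_boot.
Set Implicit Arguments. Unset Strict Implicit. Unset Printing Implicit Defensive.

Definition sperner (n : nat) (S : {set {set 'I_n}}) : Prop :=
  forall A B, A \in S -> B \in S -> A \subset B -> A = B.

Definition shatters_b (n : nat) (F : {set {set 'I_n}}) (S : {set 'I_n}) : bool :=
  [set F0 :&: S | F0 in F] == powerset S.

Definition Sh (n : nat) (F : {set {set 'I_n}}) : {set {set 'I_n}} :=
  [set S : {set 'I_n} | shatters_b F S].

Definition s_extremal (n : nat) (F : {set {set 'I_n}}) : Prop :=
  #|Sh F| = #|F|.

Definition Qfam (n : nat) (S H : {set 'I_n}) : {set {set 'I_n}} :=
  [set H :|: B | B in powerset (~: S)].

Definition Hfam (n : nat) (S : {set {set 'I_n}}) : {set {set 'I_n}} :=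
  [set F : {set 'I_n} | [forall T in S, ~~ (T \subset F)]].

Definition Ffam (n : nat) (S : {set {set 'I_n}}) (h : {set 'I_n} -> {set 'I_n})
  : {set {set 'I_n}} :=
  [set F : {set 'I_n} | [forall T in S, F \notin Qfam T (h T)]].

(* Main.v *)
Require Import Defs.
From mathcomp Require Import all_boot.
Set Implicit Arguments. Unset Strict Implicit. Unset Printing Implicit Defensive.

Definition phi (n : nat) (A X : {set 'I_n}) : {set 'I_n} :=
  ~: ((X :\: A) :|: (A :\: X)).

Lemma phiK (n : nat) (A : {set 'I_n}) : involutive (phi A).
Proof.
move=> X; apply/setP=> t; rewrite /phi !inE.
by case: (t \in X); case: (t \in A).
Qed.

Lemma memQ (n : nat) (T A X : {set 'I_n}) :
  (X \in Qfam T (T :&: A)) = (X :&: T == T :&: A).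
Proof.
apply/imsetP/eqP.
  move=> [B]; rewrite inE => BC ->; apply/setP=> t; rewrite !inE.
  have := subsetP BC t; rewrite inE.
  by case: (t \in B); case: (t \in T); case: (t \in A) => //= /(_ isT).
move=> E; exists (X :\: T); first by rewrite inE; apply/subsetP=> t; rewrite !inE => /andP[].
apply/setP=> t; move/setP: (E) => /(_ t); rewrite !inE /=.
by case: (t \in X); case: (t \in T); case: (t \in A).
Qed.

Lemma keyl (n : nat) (T A X : {set 'I_n}) :
  (X :&: T == T :&: A) = (T \subset phi A X).
Proof.
apply/eqP/subsetP.
  move=> E t tT; move/setP: (E) => /(_ t); rewrite /phi !inE tT /=.
  by case: (t \in X); case: (t \in A).
move=> H; apply/setP=> t; rewrite !inE.
case tT: (t \in T); last by rewrite !andbF.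
have := H t tT; rewrite /phi !inE.
by case: (t \in X); case: (t \in A).
Qed.

Lemma memF (n : nat) (S : {set {set 'I_n}}) (A X : {set 'I_n}) :
  (X \in Ffam S (fun T => T :&: A)) = (phi A X \in Hfam S).
Proof.
rewrite !inE; apply/forallP/forallP=> H T; have := H T;
by rewrite memQ keyl.
Qed.

Theorem proposition14 (n : nat) (S : {set {set 'I_n}}) (A : {set 'I_n}) :
  sperner S ->
  s_extremal (Ffam S (fun T => T :&: A)) /\
  Sh (Ffam S (fun T => T :&: A)) = Hfam S.
Proof.
move=> _.
have ShE : Sh (Ffam S (fun T => T :&: A)) = Hfam S.
  apply/setP=> S'; rewrite [in LHS]inE /shatters_b; apply/eqP/idP.
    move=> E.
    have : S' :&: A \in powerset S' by rewrite powersetE subsetIl.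
    rewrite -E => /imsetP [F0 F0in Eq].
    rewrite inE; apply/forallP=> T; apply/implyP=> TS; apply/negP=> TsubS.
    move: F0in; rewrite inE => /forallP /(_ T); rewrite TS /= memQ.
    move/negP; apply; apply/eqP/setP=> t.
    move/setP: (Eq) => /(_ t); rewrite !inE.
    case tT: (t \in T); rewrite ?andbF // ?andbT; have := subsetP TsubS t tT => ->.
    by case: (t \in F0); case: (t \in A).
  move=> Hin; apply/setP=> X; apply/imsetP/idP.
    by move=> [F0 _ ->]; rewrite powersetE subsetIr.
  rewrite powersetE => XS.
  exists (X :|: ~: (S' :|: A)).
    rewrite inE; apply/forallP=> T; apply/implyP=> TS; rewrite memQ.
    move: Hin; rewrite inE => /forallP /(_ T); rewrite TS /=.
    case/subsetPn => t tT tnS.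
    have tX : (t \in X) = false by apply/negbTE; apply: contra tnS; exact: subsetP XS t.
    apply/eqP => E; move/setP: (E) => /(_ t); rewrite !inE tT tX (negbTE tnS) /=.
    by case: (t \in A).
  apply/setP=> t; rewrite !inE.
  have := subsetP XS t.
  by case: (t \in X); case: (t \in S'); case: (t \in A) => // /(_ isT).
split=> //.
rewrite /s_extremal ShE.
have -> : Hfam S = phi A @: Ffam S (fun T => T :&: A).
  apply/setP=> Y; apply/idP/imsetP.
    by move=> HY; exists (phi A Y); rewrite ?phiK // memF phiK.
  by move=> [X XF ->]; rewrite -memF.
by apply: card_imset; apply: (can_inj (phiK A)).
Qed.
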